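(* Let $m,n\in\mathbb N$, $M_A=M_m(\mathbb C)$, $M_B=M_n(\mathbb C)$, let $U_A\in M_A$, $U_B\in M_B$ be unitary matrices, and let $\{e_{ij}:1\le i,j\le m\}$ be the matrix units of $M_m(\mathbb C)$. A linear map $\psi:M_A\to M_B$ is $(U_A,U_B)$-CP if and only if the block matrix $[U_B^*\psi(U_Ae_{ij})]_{1\le i,j\le m}\in M_m(M_n(\mathbb C))$ is positive semidefinite.
   Context: For $k\in\mathbb N$ and a unitary $U$, write $U^k=\mathrm{diag}(U,\dots,U)$. A linear map $\psi:M_A\to M_B$ is $(U_A,U_B)$-CP if for every $k\in\mathbb N$ and every $V=[V_{ij}]\in M_k(M_A)$ with $(U_A^k)^*V\ge0$, one has $(U_B^k)^*[\psi(V_{ij})]\ge0$. *)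

(* Defs.v *)
From HB Require Import structures.
From mathcomp Require Import all_boot all_order all_algebra.
From mathcomp Require Import complex.
From mathcomp Require Import Rstruct.
From Stdlib Require Import Reals.
Set Implicit Arguments. Unset Strict Implicit. Unset Printing Implicit Defensive.
Import Order.TTheory GRing.Theory Num.Theory.
Local Open Scope ring_scope.
Local Open Scope sesquilinear_scope.

Definition C : numClosedFieldType := (Rdefinitions.R)[i].

(* Positive semidefinite N x N complex matrix: v A v^* >= 0 for all vectors v
   (in the partial order of C, 0 <= z means z is a nonnegative real). *)
Definition psdmx (N : nat) (A : 'M[C]_N) : Prop :=
  forall v : 'rV[C]_N, 0 <= (v *m A *m v ^t*) 0 0.

(* U^k = diag(U, ..., U) (k copies), as an element of M_k(M_m). *)
Definition ampl (m k : nat) (U : 'M[C]_m) : 'M[C]_(\sum_(i < k) m) :=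
  \mxdiag_(i < k) U.

Definition UCP (m n : nat) (UA : 'M[C]_m) (UB : 'M[C]_n)
  (psi : {linear 'M[C]_m -> 'M[C]_n}) : Prop :=
  forall (k : nat) (V : 'I_k -> 'I_k -> 'M[C]_m),
    psdmx ((ampl k UA) ^t* *m \mxblock_(i < k, j < k) V i j) ->
    psdmx ((ampl k UB) ^t* *m \mxblock_(i < k, j < k) psi (V i j)).

(* Main.v *)
Require Import Defs.
From HB Require Import structures.
From mathcomp Require Import all_boot all_order all_algebra.
From mathcomp Require Import ring.
Set Implicit Arguments. Unset Strict Implicit. Unset Printing Implicit Defensive.
Import GRing.Theory Num.Theory.
Local Open Scope ring_scope.
Local Open Scope sesquilinear_scope.

Definition qf2 n (x : 'rV[C]_n) (A : 'M[C]_n) (y : 'rV[C]_n) : C := (x *m A *m y ^t*) 0 0.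

Lemma trC_mxblock k n (B_ : 'I_k -> 'I_k -> 'M[C]_n) :
  (\mxblock_(i, j) B_ i j)^t* = \mxblock_(i, j) (B_ j i)^t*.
Proof. by apply/matrixP => i j; rewrite !mxE. Qed.

Lemma ampl_mul k m (U : 'M[C]_m) (V : 'I_k -> 'I_k -> 'M[C]_m) :
  (ampl k U)^t* *m \mxblock_(i, j) V i j = \mxblock_(i, j) (U^t* *m V i j).
Proof.
have -> : (ampl k U)^t* = \mxdiag_(i < k) U^t*.
  rewrite /ampl /mxdiag trC_mxblock; apply: eq_mxblock => i j.
  rewrite eq_sym; case: eqP => _; last by rewrite trmx0 map_mx0.
  by rewrite !conform_mx_id.
by rewrite mul_mxdiag_mxblock.
Qed.

Lemma trCD m n (x y : 'M[C]_(m, n)) : (x + y)^t* = x^t* + y^t*.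
Proof. by apply/matrixP => i j; rewrite !mxE rmorphD. Qed.

Lemma trCZ m n c (x : 'M[C]_(m, n)) : (c *: x)^t* = c^* *: x^t*.
Proof. by apply/matrixP => i j; rewrite !mxE rmorphM. Qed.

Lemma qf2D n (x y : 'rV[C]_n) A :
  qf2 (x + y) A (x + y) = qf2 x A x + qf2 x A y + qf2 y A x + qf2 y A y.
Proof.
rewrite /qf2 trCD !mulmxDl !mulmxDr !mxE.
by rewrite !addrA; congr (_ + _); rewrite -!addrA; congr (_ + _); rewrite addrC.
Qed.

Lemma qf2Zl n c (x y : 'rV[C]_n) A : qf2 (c *: x) A y = c * qf2 x A y.
Proof. by rewrite /qf2 -!scalemxAl mxE. Qed.

Lemma qf2Zr n c (x y : 'rV[C]_n) A : qf2 x A (c *: y) = c^* * qf2 x A y.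
Proof.
by rewrite /qf2 trCZ -!scalemxAr mxE.
Qed.

Lemma qf2_delta n (a b : 'I_n) A : qf2 (delta_mx 0 a) A (delta_mx 0 b) = A a b.
Proof.
rewrite /qf2; have -> : (delta_mx 0 b : 'rV[C]_n)^t* = delta_mx b 0.
  by apply/matrixP => p q; rewrite !mxE rmorph_nat andbC.
by rewrite -rowE -colE !mxE.
Qed.

Lemma ge0_conj (z : C) : 0 <= z -> z^* = z.
Proof. by move=> /ger0_real /conj_Creal. Qed.

Lemma psd_herm N (A : 'M[C]_N) : psdmx A -> A^t* = A.
Proof.
move=> hA; apply/matrixP => b a; rewrite !mxE.
have R x : (qf2 x A x)^* = qf2 x A x by apply: ge0_conj; apply: hA.
set x : 'rV[C]_N := delta_mx 0 a; set y : 'rV[C]_N := delta_mx 0 b.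
have E1 := R (x + y); rewrite qf2D rmorphD /= rmorphD /= rmorphD /= !R in E1.
have E2 := R (x + 'i *: y); rewrite qf2D rmorphD /= rmorphD /= rmorphD /= !R in E2.
rewrite !qf2Zl !qf2Zr in E2.
rewrite /x /y !qf2_delta in E1 E2.
set s := A a b in E1 E2 *; set t := A b a in E1 E2 *.
have e1 : s^* + t^* = s + t.
  by apply: (addrI (A a a)); apply: (addIr (A b b)); rewrite !addrA.
rewrite !rmorphM /= conjCK conjCi in E2.
have e2 : 'i * s^* + - 'i * t^* = - 'i * s + 'i * t.
  by apply: (addrI (A a a)); apply: (addIr ('i * (- 'i * A b b))); rewrite !addrA.
have e3 : 'i * (s^* + t^*) + ('i * s^* + - 'i * t^*) = 'i * (s + t) + (- 'i * s + 'i * t).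
  by rewrite e1 e2.
have i2 : 'i * 2 != 0 :> C by rewrite mulf_neq0 ?neq0Ci ?pnatr_eq0.
apply: (mulfI i2); transitivity ('i * (s^* + t^*) + ('i * s^* + - 'i * t^*)); first ring.
by rewrite e3; ring.
Qed.

Lemma trCM m n p (x : 'M[C]_(m, n)) (y : 'M[C]_(n, p)) : (x *m y)^t* = y^t* *m x^t*.
Proof.
by apply/matrixP => i j; rewrite !mxE rmorph_sum; apply: eq_bigr => k _; rewrite !mxE rmorphM mulrC.
Qed.

Lemma unitary_l n (P : 'M[C]_n) : P \is unitarymx -> P^t* *m P = 1%:M.
Proof.
by rewrite -trmxC_unitary => /unitarymxP; rewrite trmxCK.
Qed.

Lemma psd_factor N (A : 'M[C]_N) : psdmx A -> exists X : 'M[C]_N, A = X^t* *m X.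
Proof.
move=> hA; have hH := psd_herm hA.
have /orthomx_spectralP : A \is normalmx by apply/normalmxP; rewrite hH.
set P := spectralmx A; set d := spectral_diag A => eA.
have Pu : P \is unitarymx by apply: spectral_unitarymx.
rewrite invmx_unitary // in eA.
have d0 : forall i, 0 <= d 0 i.
  move=> i; have := hA (delta_mx 0 i *m P).
  rewrite eA trCM -!mulmxA (mulmxA P) (unitarymxP Pu) mul1mx.
  rewrite !mulmxA -(mulmxA _ P) (unitarymxP Pu) mulmx1.
  by have := qf2_delta i i (diag_mx d); rewrite /qf2 => ->; rewrite mxE eqxx mulr1n.
exists (diag_mx (map_mx sqrtC d) *m P).
rewrite trCM tr_diag_mx map_diag_mx -!mulmxA (mulmxA (diag_mx _)) eA -!mulmxA; congr (_ *m _).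
rewrite mulmxA; congr (_ *m _).
apply/matrixP => i j; rewrite mul_diag_mx !mxE.
case: eqP => [->|_]; last by rewrite !mulr0n mulr0.
rewrite !mulr1n -[LHS](sqrtCK (d 0 j)) expr2; congr (_ * _); symmetry; apply: ge0_conj; by rewrite sqrtC_ge0.
Qed.
Lemma trC_mxrow k n m (R_ : 'I_k -> 'M[C]_(m, n)) :
  (\mxrow_j R_ j)^t* = \mxcol_j (R_ j)^t*.
Proof. by apply/matrixP => i j; rewrite !mxE. Qed.
Lemma psd_block k n (B : 'I_k -> 'I_k -> 'M[C]_n) :
  psdmx (\mxblock_(i, j) B i j) <->
  forall v : 'I_k -> 'rV[C]_n, 0 <= \sum_j \sum_i qf2 (v i) (B i j) (v j).
Proof.
have key : forall v : 'I_k -> 'rV[C]_n,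
  (\mxrow_i v i *m \mxblock_(i, j) B i j *m (\mxrow_i v i)^t*) 0 0
  = \sum_j \sum_i qf2 (v i) (B i j) (v j).
  move=> v; rewrite mul_mxrow_mxblock trC_mxrow mul_mxrow_mxcol summxE.
  apply: eq_bigr => j _; rewrite mulmx_suml summxE.
  by apply: eq_bigr.
split.
  by move=> H v; rewrite -key; apply: H.
move=> H w; rewrite -(submxrowK w) key; exact: H.
Qed.

Lemma trC_sum m n I (r : seq I) (F : I -> 'M[C]_(m, n)) :
  (\sum_(i <- r) F i)^t* = \sum_(i <- r) (F i)^t*.
Proof.
apply/matrixP => a b; rewrite !mxE !summxE raddf_sum; apply: eq_bigr => i _.
by rewrite !mxE.
Qed.

Lemma qf2_suml n I (r : seq I) (c : I -> C) (x : I -> 'rV[C]_n) A y :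
  qf2 (\sum_(i <- r) c i *: x i) A y = \sum_(i <- r) c i * qf2 (x i) A y.
Proof.
rewrite /qf2 !mulmx_suml summxE; apply: eq_bigr => i _.
by rewrite -!scalemxAl mxE.
Qed.

Lemma qf2_sumr n I (r : seq I) (c : I -> C) (y : I -> 'rV[C]_n) A x :
  qf2 x A (\sum_(i <- r) c i *: y i) = \sum_(i <- r) (c i)^* * qf2 x A (y i).
Proof.
rewrite /qf2 trC_sum !mulmx_sumr summxE; apply: eq_bigr => i _.
by rewrite trCZ -!scalemxAr mxE.
Qed.

Lemma qf2_sumM n I (r : seq I) (M : I -> 'M[C]_n) x y :
  qf2 x (\sum_(i <- r) M i) y = \sum_(i <- r) qf2 x (M i) y.
Proof.
rewrite /qf2 mulmx_sumr mulmx_suml summxE; exact: eq_bigr.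
Qed.

Lemma qf2_ZM n c (M : 'M[C]_n) x y : qf2 x (c *: M) y = c * qf2 x M y.
Proof. by rewrite /qf2 -scalemxAr -scalemxAl mxE. Qed.

Lemma qf2_deltaM n (x y : 'rV[C]_n) a b :
  qf2 x (delta_mx a b) y = x 0 a * (y 0 b)^*.
Proof.
rewrite /qf2 -(mul_delta_mx (0 : 'I_1)) mulmxA -colE -mulmxA -rowE.
by rewrite !mxE big_ord1 !mxE.
Qed.

Lemma mxrow_gram k N m (Z : 'I_k -> 'M[C]_(N, m)) :
  (\mxrow_i Z i)^t* *m \mxrow_j Z j = \mxblock_(i, j) ((Z i)^t* *m Z j).
Proof. by rewrite trC_mxrow mul_mxcol_mxrow. Qed.


Lemma mvlast3 (T1 T2 T3 : finType) (G : T1 -> T2 -> T3 -> C) :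
  \sum_a \sum_b \sum_c G a b c = \sum_b \sum_c \sum_a G a b c.
Proof. rewrite exchange_big; apply: eq_bigr => b _; exact: exchange_big. Qed.

Lemma mvlast4 (T1 T2 T3 T4 : finType) (G : T1 -> T2 -> T3 -> T4 -> C) :
  \sum_a \sum_b \sum_c \sum_d G a b c d = \sum_b \sum_c \sum_d \sum_a G a b c d.
Proof. rewrite exchange_big; apply: eq_bigr => b _; exact: mvlast3. Qed.

Lemma mvlast5 (T1 T2 T3 T4 T5 : finType) (G : T1 -> T2 -> T3 -> T4 -> T5 -> C) :
  \sum_a \sum_b \sum_c \sum_d \sum_e G a b c d e =
  \sum_b \sum_c \sum_d \sum_e \sum_a G a b c d e.
Proof. rewrite exchange_big; apply: eq_bigr => b _; exact: mvlast4. Qed.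

Lemma rev3 (T1 T2 T3 : finType) (G : T1 -> T2 -> T3 -> C) :
  \sum_a \sum_b \sum_c G a b c = \sum_c \sum_b \sum_a G a b c.
Proof.
transitivity (\sum_a \sum_c \sum_b G a b c).
  by apply: eq_bigr => a _; exact: exchange_big.
exact: mvlast3.
Qed.

Lemma rev4 (T1 T2 T3 T4 : finType) (G : T1 -> T2 -> T3 -> T4 -> C) :
  \sum_a \sum_b \sum_c \sum_d G a b c d = \sum_d \sum_c \sum_b \sum_a G a b c d.
Proof.
transitivity (\sum_a \sum_d \sum_c \sum_b G a b c d).
  by apply: eq_bigr => a _; exact: rev3.
exact: mvlast4.
Qed.

Lemma sum_rev5 (T1 T2 T3 T4 T5 : finType) (G : T1 -> T2 -> T3 -> T4 -> T5 -> C) :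
  \sum_a \sum_b \sum_c \sum_d \sum_e G a b c d e =
  \sum_e \sum_d \sum_c \sum_b \sum_a G a b c d e.
Proof.
transitivity (\sum_a \sum_e \sum_d \sum_c \sum_b G a b c d e).
  by apply: eq_bigr => a _; exact: rev4.
exact: mvlast5.
Qed.

Theorem theorem3p2 (m n : nat) (UA : 'M[C]_m) (UB : 'M[C]_n)
  (hUA : UA \is unitarymx) (hUB : UB \is unitarymx)
  (psi : {linear 'M[C]_m -> 'M[C]_n}) :
  UCP UA UB psi <->
  psdmx (\mxblock_(i < m, j < m) (UB ^t* *m psi (UA *m delta_mx i j))).
Proof.
split.
  move=> hU; have := hU m (fun i j => UA *m delta_mx i j); rewrite !ampl_mul; apply.
  have -> : \mxblock_(i, j) (UA^t* *m (UA *m delta_mx i j)) =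
            \mxblock_(i < m, j < m) (delta_mx i j : 'M[C]_m).
    by apply: eq_mxblock => i j; rewrite mulmxA unitary_l // mul1mx.
  apply/psd_block => v.
  rewrite (eq_bigr (fun j => (\sum_i v i 0 i) * (v j 0 j)^*)); last first.
    by move=> j _; rewrite mulr_suml; apply: eq_bigr => i _; rewrite qf2_deltaM.
  rewrite -mulr_sumr -rmorph_sum; exact: mul_conjC_ge0.
move=> hC k V; rewrite !ampl_mul => hV; apply/psd_block => v.
have [X eX] := psd_factor hV.
have hW : forall i j, V i j = UA *m ((submxrow X i)^t* *m submxrow X j).
  move=> i j; have := congr1 (fun M => submxblock M i j) eX.
  rewrite /= mxblockK -(submxrowK X) mxrow_gram mxblockK !submxrowK => <-.
  by rewrite mulmxA (unitarymxP hUA) mul1mx.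
have phiE : forall W, UB^t* *m psi (UA *m W) =
    \sum_a \sum_b W a b *: (UB^t* *m psi (UA *m delta_mx a b)).
  move=> W; rewrite {1}(matrix_sum_delta W) mulmx_sumr linear_sum mulmx_sumr.
  apply: eq_bigr => a _; rewrite mulmx_sumr linear_sum mulmx_sumr.
  by apply: eq_bigr => b _; rewrite -scalemxAr linearZ /= -scalemxAr.
set P := fun a b => UB^t* *m psi (UA *m delta_mx a b).
set Y := fun i => submxrow X i.
set u := fun r a => \sum_i ((Y i) r a)^* *: v i.
have -> : \sum_j \sum_i qf2 (v i) (UB ^t* *m psi (V i j)) (v j) =
   \sum_r \sum_b \sum_a qf2 (u r a) (P a b) (u r b).
  pose F := fun r b a i j => ((Y i) r a)^* * (Y j) r b * qf2 (v i) (P a b) (v j).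
  transitivity (\sum_j \sum_i \sum_a \sum_b \sum_r F r b a i j).
    apply: eq_bigr => j _; apply: eq_bigr => i _.
    rewrite hW phiE qf2_sumM; apply: eq_bigr => a _.
    rewrite qf2_sumM; apply: eq_bigr => b _.
    rewrite qf2_ZM mxE mulr_suml; apply: eq_bigr => r _.
    by rewrite /F /Y /P !mxE.
  rewrite -(sum_rev5 F).
  apply: eq_bigr => r _; apply: eq_bigr => b _; apply: eq_bigr => a _.
  rewrite /u qf2_suml; apply: eq_bigr => i _.
  rewrite qf2_sumr mulr_sumr; apply: eq_bigr => j _.
  by rewrite conjCK mulrA.
apply: sumr_ge0 => r _; exact: (proj1 (psd_block _) hC (u r)).
Qed.
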